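(* Let $s\ge 1$, $q=4^{2s}$, and let $\theta$ be the automorphism of $F_q$ given by $\theta(a)=a^{4^s}$. Let $n$ be an even positive integer and suppose $x^n-1=h(x)g(x)$ in $F_q[x;\theta]$, where the degree of $g(x)$ is odd. If $g(x)$ is a $\theta$-palindromic polynomial, then $h(x)$ is a palindromic polynomial.
   Context: $F_q[x;\theta]$ is the skew polynomial ring: polynomials $\sum a_ix^i$ with $a_i\in F_q$, usual addition, and multiplication determined by $xa=\theta(a)x$ for $a\in F_q$. A polynomial $f(x)=a_0+a_1x+\dots+a_tx^t$ of degree $t$ is palindromic if $a_i=a_{t-i}$ for all $i\in\{0,\ldots,t\}$, and $\theta$-palindromic if $a_i=\theta(a_{t-i})$ for all $i\in\{0,\ldots,t\}$. *)

(* Defs.v *)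
From HB Require Import structures.
From mathcomp Require Import all_boot all_order all_algebra all_field.
Set Implicit Arguments. Unset Strict Implicit. Unset Printing Implicit Defensive.
Import GRing.Theory.
Local Open Scope ring_scope.

Definition theta_s (F : fieldType) (s : nat) (a : F) : F := a ^+ (4 ^ s)%N.

(* Skew polynomials in F[x; theta] are represented by their coefficient
   sequences, i.e. by {poly F} (addition is the usual one).  Multiplication
   is the skew product determined by x a = theta(a) x, i.e.
   (sum_i a_i x^i)(sum_j b_j x^j) = sum_{i,j} a_i theta^i(b_j) x^(i+j). *)
Definition skew_mul (F : fieldType) (theta : F -> F) (p q : {poly F}) : {poly F} :=
  \poly_(k < (size p + size q).-1)
     \sum_(i < k.+1) p`_i * iter i theta (q`_(k - i)).

Definition palindromic (F : fieldType) (f : {poly F}) : Prop :=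
  forall i : nat, (i <= (size f).-1)%N -> f`_i = f`_((size f).-1 - i).

Definition theta_palindromic (F : fieldType) (theta : F -> F) (f : {poly F}) : Prop :=
  forall i : nat, (i <= (size f).-1)%N -> f`_i = theta (f`_((size f).-1 - i)).

(* Main.v *)
Require Import Defs.
From HB Require Import structures.
From mathcomp Require Import all_boot all_order all_algebra all_field.
From mathcomp Require Import zify.
Import GRing.Theory.
Local Open Scope ring_scope.

Lemma iter_th0 (F : fieldType) (th : F -> F) (th0 : th 0 = 0) i : iter i th 0 = 0.
Proof. by elim: i => //= i ->. Qed.

Lemma SP (F : fieldType) (th : F -> F) (th0 : th 0 = 0) (a b : nat -> F) m t k :
  (forall i, (m < i)%N -> a i = 0) -> (forall j, (t < j)%N -> b j = 0) ->
  \sum_(i < k.+1) a i * iter i th (b (k - i)%N) =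
  \sum_(i < m.+1) \sum_(j < t.+1) (if (i + j)%N == k then a i * iter i th (b j) else 0).
Proof.
move=> ha hb.
have inner : forall i : 'I_m.+1, \sum_(j < t.+1) (if (i + j)%N == k then a i * iter i th (b j) else 0)
   = if (i <= k)%N && (k - i < t.+1)%N then a i * iter i th (b (k - i)%N) else 0.
  move=> i; case: ifP => [/andP [hik hkt]|hn].
    rewrite (bigD1 (Ordinal hkt)) //= big1 ?addr0.
      by rewrite subnKC // eqxx.
    move=> j /eqP hj; case: eqP => // hij; exfalso; apply: hj; apply: val_inj => /=; lia.
  apply: big1 => j _; case: eqP => // hij; move: hn; rewrite -hij; have := ltn_ord j; lia.
rewrite (eq_bigr _ (fun i _ => inner i)).
pose G i := if (i <= k)%N then a i * iter i th (b (k - i)%N) else 0.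
rewrite (big_ord_widen (k.+1 + m) (fun i => a i * iter i th (b (k - i)%N)) (leq_addr m k.+1)) big_mkcond /=.
rewrite (big_ord_widen (k.+1 + m) (fun i => if (i <= k)%N && (k - i < t.+1)%N then a i * iter i th (b (k - i)%N) else 0) (_ : m.+1 <= k.+1 + m)%N) ?big_mkcond /=; last by lia.
rewrite [RHS]big_mkcond /=. apply: eq_bigr => i _.
case: (ltnP i k.+1) => hik; case: (ltnP i m.+1) => him /=.
- rewrite ltnS in hik; rewrite hik /=; case: ifP => // /negbT; rewrite -leqNgt => hkt.
  by rewrite hb ?iter_th0 ?mulr0 //; lia.
- by rewrite ha ?mul0r.
- by have -> : (i <= k)%N = false by lia.
- by [].
Qed.

Lemma Stop (F : fieldType) (th : F -> F) (th0 : th 0 = 0) (a b : nat -> F) d t :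
  (forall i, (d < i)%N -> a i = 0) -> (forall j, (t < j)%N -> b j = 0) ->
  \sum_(i < (d + t).+1) a i * iter i th (b (d + t - i)%N) = a d * iter d th (b t).
Proof.
move=> ha hb.
have hd : (d < (d + t).+1)%N by lia.
rewrite (bigD1 (Ordinal hd)) //= big1 ?addr0; first by rewrite addKn.
move=> i /eqP hi; case: (ltngtP d i) => hdi.
- by rewrite ha ?mul0r.
- by rewrite hb ?iter_th0 ?mulr0 //; lia.
- by exfalso; apply: hi; apply: val_inj.
Qed.

Lemma Uniq (F : fieldType) (th : F -> F) (th0 : th 0 = 0) (D b : nat -> F) m t :
  (forall d, iter d th (b t) != 0) ->
  (forall i, (m < i)%N -> D i = 0) -> (forall j, (t < j)%N -> b j = 0) ->
  (forall k, (k <= m + t)%N -> \sum_(i < k.+1) D i * iter i th (b (k - i)%N) = 0) ->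
  forall i, D i = 0.
Proof.
move=> hbt hD hb hS.
suff H : forall j i, (m.+1 - j <= i)%N -> D i = 0.
  by move=> i; apply: (H m.+1); lia.
elim=> [|j IH] i hi.
  by apply: hD; lia.
case: (leqP (m.+1 - j) i) => hij; first exact: IH.
have hle : (i + t <= m + t)%N by lia.
have := hS (i + t)%N hle.
rewrite (@Stop _ _ th0) //; last by move=> i' hi'; apply: IH; lia.
by move/eqP; rewrite mulf_eq0 (negbTE (hbt i)) orbF => /eqP.
Qed.

Lemma iter_inv (F : Type) (th : F -> F) (thK : forall x, th (th x) = x) i x :
  iter i th x = if odd i then th x else x.
Proof.
elim: i => //= i ->; case: (odd i) => //=.
Qed.

Theorem theorem4 (s : nat) (F : finFieldType) (h g : {poly F}) (n : nat) :
  (1 <= s)%N ->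
  #|F| = (4 ^ (2 * s))%N ->
  (0 < n)%N -> ~~ odd n ->
  g != 0 ->
  odd (size g).-1 ->
  'X^n - 1 = skew_mul (theta_s s) h g ->
  theta_palindromic (theta_s s) g ->
  palindromic h.
Proof.
move=> hs hcard hn hev gnz hto E hpal.
pose th : F -> F := theta_s s.
rewrite -/th in E hpal.
have thK : forall x : F, th (th x) = x.
  by move=> x; rewrite /th /theta_s -exprM -expnD addnn -mul2n -hcard expf_card.
have th0 : th 0 = 0 by rewrite /th /theta_s expr0n expn_eq0.
have thnz : forall x : F, x != 0 -> th x != 0.
  by move=> x; apply: contra => /eqP hx; rewrite -[x]thK hx th0.
have itnz : forall d (x : F), x != 0 -> iter d th x != 0.
  by move=> d x hx; rewrite (@iter_inv _ _ thK); case: ifP => // _; apply: thnz.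
have oppE : forall x : F, - x = x.
  have : (-1 : F) ^+ #|F| = -1 by rewrite expf_card.
  rewrite -signr_odd hcard oddX /= orbF.
  have -> : (2 * s == 0)%N = false by lia.
  by rewrite expr0 => h1 x; rewrite -mulN1r -h1 mul1r.
have hc : forall k, ('X^n - 1 : {poly F})`_k = (k == n)%:R - (k == 0)%:R.
  by move=> k; rewrite coefB coefXn coef1.
have hcoef : forall k, ('X^n - 1 : {poly F})`_k =
   if (k < (size h + size g).-1)%N then
     \sum_(i < k.+1) h`_i * iter i th (g`_(k - i)%N) else 0.
  by move=> k; rewrite E /skew_mul coef_poly.
have hnz : h != 0.
  apply/eqP => h0; move: (hcoef n); rewrite hc h0 eqxx.
  have -> : (n == 0)%N = false by lia.
  rewrite subr0 /=.
  have -> : \sum_(i < n.+1) (0:{poly F})`_i * iter i th g`_(n - i)%N = 0.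
    by apply: big1 => i _; rewrite coef0 mul0r.
  by case: ifP => _ /eqP; rewrite ?mulr1n oner_eq0.
set m := (size h).-1.
set t := (size g).-1.
have szh : size h = m.+1 by rewrite /m prednK // size_poly_gt0.
have szg : size g = t.+1 by rewrite /t prednK // size_poly_gt0.
have hsupp : forall i, (m < i)%N -> h`_i = 0.
  by move=> i hi; rewrite nth_default // szh.
have gsupp : forall i, (t < i)%N -> g`_i = 0.
  by move=> i hi; rewrite nth_default // szg.
have hm0 : h`_m != 0.
  by have := hnz; rewrite -lead_coef_eq0 /lead_coef.
have gt0 : g`_t != 0.
  by have := gnz; rewrite -lead_coef_eq0 /lead_coef.
have hnmt : n = (m + t)%N.
  move: (hcoef (m + t)%N); rewrite szh szg.
  have -> : ((m + t) < (m.+1 + t.+1).-1)%N by lia.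
  rewrite (@Stop _ _ th0 (fun i => h`_i) (fun j => g`_j)) // hc.
  have tpos : (0 < t)%N by move: hto; rewrite -/t; case: (t).
  case: eqP => [//|_]; have -> : (m + t == 0)%N = false by lia.
  rewrite /= subrr => /esym /eqP; rewrite mulf_eq0 (negbTE hm0) (negbTE (itnz _ _ gt0)).
  by [].
have modd : odd m.
  by move: hev hto; rewrite hnmt oddD -/t; case: (odd m); case: (odd t).
have hS : forall k, (k <= n)%N ->
    \sum_(i < k.+1) h`_i * iter i th (g`_(k - i)%N) = (k == n)%:R - (k == 0)%:R.
  move=> k hk; rewrite -hc hcoef szh szg.
  by have -> : (k < (m.+1 + t.+1).-1)%N by lia.
pose r i := if (i <= m)%N then h`_(m - i) else 0.
have rsupp : forall i, (m < i)%N -> r i = 0.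
  by move=> i hi; rewrite /r; have -> : (i <= m)%N = false by lia.
have hR : forall k, (k <= n)%N ->
    \sum_(i < k.+1) r i * iter i th (g`_(k - i)%N) =
    \sum_(i < (n - k).+1) h`_i * iter i th (g`_(n - k - i)%N).
  move=> k hk.
  rewrite (@SP _ _ th0 r (fun j => g`_j) m t k rsupp gsupp).
  rewrite (@SP _ _ th0 (fun j => h`_j) (fun j => g`_j) m t (n - k) hsupp gsupp).
  rewrite (reindex_inj rev_ord_inj); apply: eq_bigr => i _.
  rewrite (reindex_inj rev_ord_inj); apply: eq_bigr => j _.
  rewrite /= !subSS.
  have im := ltn_ord i; have jt := ltn_ord j.
  have -> : ((m - i) + (t - j) == k)%N = ((i + j)%N == (n - k)%N) by apply/eqP/eqP; lia.
  case: ifP => // _.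
  rewrite /r leq_subr subKn -1?ltnS //.
  rewrite (hpal (t - j)%N (leq_subr _ _)) -/t subKn -1?ltnS //.
  rewrite -iterSr !(@iter_inv _ _ thK).
  have -> : odd (m - i).+1 = odd i.
    by rewrite /= oddB -1?ltnS // modd; case: (odd i).
  by [].
pose D i := h`_i + r i.
have hD0 : forall i, D i = 0.
  apply: (@Uniq _ _ th0 D (fun j => g`_j) m t).
  - by move=> d; apply: itnz.
  - by move=> i hi; rewrite /D hsupp // rsupp // addr0.
  - exact: gsupp.
  move=> k hk; rewrite -hnmt in hk.
  under eq_bigr => i _ do rewrite /D mulrDl.
  rewrite big_split /= hS // hR // hS ?leq_subr //.
  have e1 : (n - k == n)%N = (k == 0)%N by apply/eqP/eqP; lia.
  have e2 : (n - k == 0)%N = (k == n)%N by apply/eqP/eqP; lia.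
  by rewrite e1 e2 addrC subrKA ?subrr // addrA addrNK subrr.
move=> i hi; have := hD0 i; rewrite /D /r -/m hi => /eqP.
by rewrite addr_eq0 oppE => /eqP.
Qed.
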